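(* Let $(X,d)$ be a Ptolemaic metric space and let $p\in X$. Then the function $$\tilde\tau_p(x,y)=\log\Big(1+\frac{d(x,y)}{\sqrt{d(x,p)d(y,p)}}\Big)$$ is a metric on $X\setminus\{p\}$.
   Context: A metric space $(X,d)$ is Ptolemaic if $d(x,y)d(z,w)\leq d(x,z)d(y,w)+d(x,w)d(y,z)$ for all $x,y,z,w\in X$. *)

(* Defs.v *)
From Stdlib Require Import Reals.
Open Scope R_scope.

Definition is_metric {X : Type} (d : X -> X -> R) : Prop :=
  (forall x y, 0 <= d x y) /\
  (forall x y, d x y = 0 <-> x = y) /\
  (forall x y, d x y = d y x) /\
  (forall x y z, d x z <= d x y + d y z).

Definition ptolemaic {X : Type} (d : X -> X -> R) : Prop :=
  forall x y z w, d x y * d z w <= d x z * d y w + d x w * d y z.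

Definition punctured (X : Type) (p : X) : Type := { x : X | x <> p }.

Definition tau_tilde {X : Type} (d : X -> X -> R) (p : X)
  (x y : punctured X p) : R :=
  ln (1 + d (proj1_sig x) (proj1_sig y)
          / sqrt (d (proj1_sig x) p * d (proj1_sig y) p)).

(* Main.v *)
Require Import Defs.
From Stdlib Require Import Reals Lra Psatz ProofIrrelevance.
Open Scope R_scope.

Lemma ln_le (x y : R) : 0 < x -> x <= y -> ln x <= ln y.
Proof. intros H [H1|H1]. left; apply ln_increasing; auto. subst; lra. Qed.

Lemma key_ineq (D u v al be ga : R) :
  0 < al -> 0 < be -> 0 < ga -> 0 <= u -> 0 <= v -> 0 <= D ->
  D * (be*be) <= u * (ga*ga) + v * (al*al) ->
  D <= u + v -> ga*ga <= be*be + v -> al*al <= be*be + u ->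
  D * (be*be) <= u*ga*be + v*al*be + u*v.
Proof.
  intros Hal Hbe Hga Hu Hv HD Hp Ht Hc Ha.
  destruct (Rle_lt_dec be ga) as [Hg|Hg]; destruct (Rle_lt_dec be al) as [Hl|Hl].
  - assert (u*be <= u*ga) by nra. assert (v*be <= v*al) by nra.
    assert (D*(be*be) <= (u+v)*(be*be)) by (apply Rmult_le_compat_r; nra).
    assert (u*be*be <= u*ga*be) by (apply Rmult_le_compat_r; lra).
    assert (v*be*be <= v*al*be) by (apply Rmult_le_compat_r; lra).
    assert (0 <= u*v) by (apply Rmult_le_pos; lra). lra.
  - assert (ga*(ga-be) <= v) by nra.
    assert (u*(ga*(ga-be)) <= u*v) by (apply Rmult_le_compat_l; lra).
    assert (v*(al*al) <= v*(al*be)) by (apply Rmult_le_compat_l; nra). lra.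
  - assert (al*(al-be) <= u) by nra.
    assert (v*(al*(al-be)) <= u*v) by (rewrite (Rmult_comm u); apply Rmult_le_compat_l; lra).
    assert (u*(ga*ga) <= u*(ga*be)) by (apply Rmult_le_compat_l; nra). lra.
  - assert (v*(al*al) <= v*(al*be)) by (apply Rmult_le_compat_l; nra).
    assert (u*(ga*ga) <= u*(ga*be)) by (apply Rmult_le_compat_l; nra).
    assert (0 <= u*v) by (apply Rmult_le_pos; lra). lra.
Qed.

Theorem theorem2p2 (X : Type) (d : X -> X -> R) (p : X) :
  is_metric d -> ptolemaic d -> is_metric (tau_tilde d p).
Proof.
  intros [Hnn [Hid [Hsym Htri]]] Hpt.
  assert (Hpos : forall x : punctured X p, 0 < d (proj1_sig x) p).
  { intros [x Hx]; simpl. destruct (Hnn x p) as [H|H]; auto.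
    exfalso; apply Hx; apply Hid; auto. }
  assert (Hs : forall x y : punctured X p,
     sqrt (d (proj1_sig x) p * d (proj1_sig y) p) =
     sqrt (d (proj1_sig x) p) * sqrt (d (proj1_sig y) p)).
  { intros; apply sqrt_mult; left; apply Hpos. }
  assert (Hsp : forall x : punctured X p, 0 < sqrt (d (proj1_sig x) p)).
  { intros; apply sqrt_lt_R0, Hpos. }
  assert (Hsq : forall x : punctured X p,
     sqrt (d (proj1_sig x) p) * sqrt (d (proj1_sig x) p) = d (proj1_sig x) p).
  { intros; apply sqrt_sqrt; left; apply Hpos. }
  assert (Hf : forall x y : punctured X p,
     0 <= d (proj1_sig x) (proj1_sig y) / sqrt (d (proj1_sig x) p * d (proj1_sig y) p)).
  { intros. rewrite Hs. unfold Rdiv; apply Rmult_le_pos; auto. left; apply Rinv_0_lt_compat.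
    apply Rmult_lt_0_compat; auto. }
  unfold tau_tilde; split; [|split; [|split]].
  - intros x y. rewrite <- ln_1. apply ln_le; [lra|]. specialize (Hf x y). lra.
  - intros x y; split.
    + intro H. rewrite <- ln_1 in H.
      apply ln_inv in H; [| specialize (Hf x y); lra | lra].
      assert (H0 : d (proj1_sig x) (proj1_sig y) = 0).
      { rewrite Hs in H. pose proof (Hsp x). pose proof (Hsp y).
        assert (0 < sqrt (d (proj1_sig x) p) * sqrt (d (proj1_sig y) p)) by
          (apply Rmult_lt_0_compat; auto).
        set (s := sqrt (d (proj1_sig x) p) * sqrt (d (proj1_sig y) p)) in *.
        assert (E : d (proj1_sig x) (proj1_sig y) / s * s = 0) by
          (replace (d (proj1_sig x) (proj1_sig y) / s) with 0 by lra; ring).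
        unfold Rdiv in E. rewrite Rmult_assoc, Rinv_l, Rmult_1_r in E; lra. }
      apply Hid in H0. destruct x as [x Hx], y as [y Hy]; simpl in H0; subst.
      f_equal; apply proof_irrelevance.
    + intros ->. rewrite (proj2 (Hid _ _) eq_refl). unfold Rdiv.
      rewrite Rmult_0_l, Rplus_0_r. apply ln_1.
  - intros x y. rewrite Hsym, Rmult_comm. reflexivity.
  - intros x y z.
    rewrite <- ln_mult; [| specialize (Hf x y); lra | specialize (Hf y z); lra].
    apply ln_le; [specialize (Hf x z); lra|].
    rewrite !Hs.
    pose proof (Hsp x) as Hal. pose proof (Hsp y) as Hbe. pose proof (Hsp z) as Hga.
    pose proof (Hsq x) as Ha. pose proof (Hsq y) as Hb. pose proof (Hsq z) as Hc.
    destruct x as [x Hx], y as [y Hy], z as [z Hz]; simpl in *.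
    set (al := sqrt (d x p)) in *. set (be := sqrt (d y p)) in *.
    set (ga := sqrt (d z p)) in *.
    pose proof (Hpt x z y p) as P.
    rewrite (Hsym z y) in P. rewrite <- Hb, <- Hc, <- Ha in P.
    pose proof (Htri x y z) as T.
    pose proof (Htri z y p) as T1. rewrite (Hsym z y), <- Hb, <- Hc in T1.
    pose proof (Htri x y p) as T2. rewrite <- Hb, <- Ha in T2.
    pose proof (key_ineq (d x z) (d x y) (d y z) al be ga Hal Hbe Hga
      (Hnn _ _) (Hnn _ _) (Hnn _ _) ltac:(lra) T ltac:(lra) ltac:(lra)) as K.
    assert (E1 : 1 + d x z / (al * ga) = 1 + d x z * (be*be) / (al*be*be*ga))
      by (field; lra).
    assert (E2 : (1 + d x y / (al * be)) * (1 + d y z / (be * ga)) =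
      1 + (d x y*ga*be + d y z*al*be + d x y*d y z) / (al*be*be*ga))
      by (field; lra).
    rewrite E1, E2. apply Rplus_le_compat_l. unfold Rdiv.
    apply Rmult_le_compat_r; auto.
    left; apply Rinv_0_lt_compat. repeat apply Rmult_lt_0_compat; auto.
Qed.
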